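(* Let $G$ be a directed graph and let $V_C$ be a zero forcing set of $G$. Then the following are equivalent: (i) for every $(u,v)\in (V(G)\times V(G))\setminus E(G)$, the LTI network on $G+\{(u,v)\}$ with control nodes $V_C$ is not strongly structurally controllable; (ii) there exist a set $\mathcal{C}$ of node-disjoint chains covering $V(G)$ with set of sources $V_C$ and a time function $T$ for $\mathcal{C}$ such that $G=\mathcal{G}^{\mathcal{C},T}_{\mathrm{perf}}$.
   Context: Graphs are directed, self-loops allowed; $V(G)=\{1,\ldots,n\}$; $G+E'$ has edge set $E(G)\cup E'$. $\mathcal{Q}(G)=\{A\in\mathbb{R}^{n\times n}:\text{for } i\neq j,\ A_{ij}\neq0\iff(j,i)\in E(G)\}$. For $V_C=\{j_1,\ldots,j_m\}$, $B=[e_{j_1},\ldots,e_{j_m}]$; the LTI network on $G$ with control nodes $V_C$ is strongly structurally controllable if $(A,B)$ is controllable for all $A\in\mathcal{Q}(G)$. Zero forcing: with nodes colored black/white, a black node with exactly one white out-neighbor turns it black; a set $S$ is a zero forcing set if starting from black set $S$ and applying this rule repeatedly makes all nodes black. A chain is a directed path graph with source (start node) and sink (end node); for a non-sink $v$, $v+1$ is its out-neighbor. For node-disjoint chains $\mathcal{C}=\{C_1,\ldots,C_m\}$, $V=\bigcup_iV(C_i)$, $\gamma=|V|-m+1$, a time function is $T:V\to\{1,\ldots,\gamma\}$ with (1) $T(v)=1$ for every source; (2) distinct non-source nodes get distinct values; (3) $T(v)<T(v+1)$ for non-sink $v$. $T_{\max}(v)=\gamma$ for a sink $v$, else $T_{\max}(v)=T(v+1)-1$.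 The perfect $(\mathcal{C},T)$-constructed graph $\mathcal{G}^{\mathcal{C},T}_{\mathrm{perf}}$ has node set $V$ and edge set $\bigcup_iE(C_i)\cup\{(u,v)\in V\times V: T_{\max}(u)\geq T(v)\}$. *)

(* Defs.v *)
From Stdlib Require Import Rdefinitions.
From HB Require Import structures.
From mathcomp Require Import all_boot all_order all_algebra.
From mathcomp Require Import Rstruct.

Set Implicit Arguments.
Unset Strict Implicit.
Unset Printing Implicit Defensive.

Import GRing.Theory.

(* A directed graph on V(G) = 'I_n (nodes 0..n-1 stand for 1..n), self-loops
   allowed, is given by its edge set E : {set 'I_n * 'I_n}; (u,v) is an edge
   from u to v. G + E' has edge set E :|: E'. *)

Definition inQ (n : nat) (E : {set 'I_n * 'I_n}) (A : 'M[R]_n) : Prop :=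
  forall i j : 'I_n, i != j -> ((A i j != 0)%R <-> (j, i) \in E).

Definition Bmat (n : nat) (VC : {set 'I_n}) : 'M[R]_(n, #|VC|) :=
  \matrix_(i < n, k < #|VC|) (if i == enum_val k then 1%R else 0%R).

Definition kalman (n m : nat) (A : 'M[R]_n) (B : 'M[R]_(n, m)) :=
  @mxrow R n (fun _ => m) n (fun k : 'I_n => ((A ^+ k) *m B)%R).

Definition controllable (n m : nat) (A : 'M[R]_n) (B : 'M[R]_(n, m)) : Prop :=
  \rank (kalman A B) = n.

Definition SSC (n : nat) (E : {set 'I_n * 'I_n}) (VC : {set 'I_n}) : Prop :=
  forall A : 'M[R]_n, inQ E A -> controllable A (Bmat VC).

Definition out_nbrs (n : nat) (E : {set 'I_n * 'I_n}) (x : 'I_n) : {set 'I_n} :=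
  [set y | (x, y) \in E].

Definition forces (n : nat) (E : {set 'I_n * 'I_n}) (Blk : {set 'I_n})
  (x y : 'I_n) : bool :=
  (x \in Blk) && (out_nbrs E x :\: Blk == [set y]).

Fixpoint valid_forcing (n : nat) (E : {set 'I_n * 'I_n}) (Blk : {set 'I_n})
  (s : seq 'I_n) : bool :=
  match s with
  | [::] => true
  | y :: s' => [exists x, forces E Blk x y] && valid_forcing E (y |: Blk) s'
  end.

Definition zero_forcing_set (n : nat) (E : {set 'I_n * 'I_n}) (S : {set 'I_n})
  : Prop :=
  exists s : seq 'I_n, valid_forcing E S s /\ S :|: [set x in s] = [set: 'I_n].

(** A chain is represented by the nonempty duplicate-free sequence of
    its nodes, from source (head) to sink (last); its edges are the pairs of
    consecutive nodes. *)
Definition chain_edges_of (n : nat) (c : seq 'I_n) : seq ('I_n * 'I_n) :=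
  zip c (behead c).

Definition chain_edges (n : nat) (C : seq (seq 'I_n)) : {set 'I_n * 'I_n} :=
  [set p | has (fun c => p \in chain_edges_of c) C].

Definition chain_cover (n : nat) (C : seq (seq 'I_n)) : Prop :=
  all (fun c => c != [::]) C /\ uniq (flatten C) /\
  (forall v : 'I_n, v \in flatten C).

Definition sources (n : nat) (C : seq (seq 'I_n)) : {set 'I_n} :=
  [set v | has (fun c => (c != [::]) && (v == head v c)) C].

Definition is_sink (n : nat) (C : seq (seq 'I_n)) (v : 'I_n) : bool :=
  [forall w, (v, w) \notin chain_edges C].

Definition gamma (n : nat) (C : seq (seq 'I_n)) : nat :=
  addn (subn (size (flatten C)) (size C)) 1.

Definition time_function (n : nat) (C : seq (seq 'I_n)) (T : 'I_n -> nat)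
  : Prop :=
  (forall v, 1 <= T v <= gamma C)%N /\
  (forall v, v \in sources C -> T v = 1%N) /\
  (forall u v, u \notin sources C -> v \notin sources C -> u != v ->
     T u != T v) /\
  (forall u v, (u, v) \in chain_edges C -> (T u < T v)%N).

Definition Tmax (n : nat) (C : seq (seq 'I_n)) (T : 'I_n -> nat) (v : 'I_n)
  : nat :=
  match [pick w | (v, w) \in chain_edges C] with
  | Some w => (T w).-1
  | None => gamma C
  end.

Definition perfect_edges (n : nat) (C : seq (seq 'I_n)) (T : 'I_n -> nat)
  : {set 'I_n * 'I_n} :=
  chain_edges C :|: [set p | (T p.2 <= Tmax C T p.1)%N].

(* Main.v *)
Require Import Defs.
From Stdlib Require Import Rdefinitions.
From HB Require Import structures.
From mathcomp Require Import all_boot all_order all_algebra.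
From mathcomp Require Import Rstruct.
From Stdlib Require Import Classical_Prop.
From mathcomp Require Import zify.
Set Implicit Arguments. Unset Strict Implicit. Unset Printing Implicit Defensive.

Local Notation zb c := (zip c (behead c)).

Lemma mem_zb (T : eqType) (c : seq T) u w :
  (u, w) \in zb c -> (u \in c) /\ (w \in behead c).
Proof.
elim: c => [|a c IH] //=; case: c IH => [|b c] IH //=.
rewrite in_cons => /orP [/eqP [] -> ->|/IH [h1 h2]]; first by split; rewrite !inE eqxx ?orbT.
move: h2 => /= h2; split => /=; [by rewrite h1 orbT | by rewrite in_cons h2 orbT].
Qed.

Lemma zb_func (T : eqType) (c : seq T) u w1 w2 :
  uniq c -> (u, w1) \in zb c -> (u, w2) \in zb c -> w1 = w2.
Proof.
elim: c => [|a c IH] //=; case: c IH => [|b c] IH //= /andP [aN Hu].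
rewrite !in_cons => /orP [/eqP [e1 e2]|h1] /orP [/eqP [e3 e4]|h2].
- by rewrite e2 e4.
- by have := (mem_zb h2).1; rewrite e1 => h; rewrite h in aN.
- by have := (mem_zb h1).1; rewrite e3 => h; rewrite h in aN.
- exact: IH.
Qed.

Lemma zb_inj (T : eqType) (c : seq T) u1 u2 w :
  uniq c -> (u1, w) \in zb c -> (u2, w) \in zb c -> u1 = u2.
Proof.
elim: c => [|a c IH] //=; case: c IH => [|b c] IH //= /andP [aN Hu].
move: Hu => /andP [bN Hu'].
rewrite !in_cons => /orP [/eqP [e1 e2]|h1] /orP [/eqP [e3 e4]|h2].
- by rewrite e1 e3.
- by have := (mem_zb h2).2; rewrite e2 /= => h; rewrite h in bN.
- by have := (mem_zb h1).2; rewrite e4 /= => h; rewrite h in bN.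
- by apply: IH => //=; rewrite bN.
Qed.

Lemma zb_pred (T : eqType) (c : seq T) w :
  w \in behead c -> exists u, (u, w) \in zb c.
Proof.
elim: c => [|a c IH] //=; case: c IH => [|b c] IH //=.
rewrite in_cons => /orP [/eqP ->|h]; first by exists a; rewrite inE eqxx.
have [u hu] := IH h; exists u; by rewrite inE hu orbT.
Qed.

Lemma zb_last (T : eqType) (a : T) (c : seq T) x :
  x \in a :: c -> (forall w, (x, w) \notin zb (a :: c)) -> x = last a c.
Proof.
elim: c a => [|b c IH] a /=; first by rewrite inE => /eqP.
rewrite in_cons => /orP [/eqP ->|h] H.
  by have := H b; rewrite inE eqxx.
apply: IH => // w; apply: contra (H w) => hw; by rewrite /= in_cons hw orbT.
Qed.

Lemma zb_rcons (T : eqType) (a : T) (c : seq T) y :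
  zb (rcons (a :: c) y) = rcons (zb (a :: c)) (last a c, y).
Proof.
elim: c a => [|b c IH] a //=.
by rewrite -IH.
Qed.

Lemma flatten_uniq_eq (T : eqType) (C : seq (seq T)) c1 c2 x :
  uniq (flatten C) -> c1 \in C -> c2 \in C -> x \in c1 -> x \in c2 -> c1 = c2.
Proof.
elim: C => [|c C IH] //=; rewrite cat_uniq => /and3P [uc hn uf].
have nin : forall y, y \in c -> y \in flatten C -> False.
  move=> y yc yf; move/hasP: hn; apply; by exists y.
rewrite !in_cons => /orP [/eqP e1|h1] /orP [/eqP e2|h2] x1 x2.
- by rewrite e1 e2.
- exfalso; apply: (nin x); first by rewrite -e1.
  by apply/flattenP; exists c2.
- exfalso; apply: (nin x); first by rewrite -e2.
  by apply/flattenP; exists c1.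
- exact: IH.
Qed.

Lemma flatten_uniq_mem (T : eqType) (C : seq (seq T)) c :
  uniq (flatten C) -> c \in C -> uniq c.
Proof.
elim: C => [|c' C IH] //=; rewrite cat_uniq => /and3P [uc hn uf].
by rewrite in_cons => /orP [/eqP ->|h] //; apply: IH.
Qed.

Lemma ceP (n : nat) (C : seq (seq 'I_n)) p :
  reflect (exists2 c, c \in C & p \in zb c) (p \in chain_edges C).
Proof. rewrite /chain_edges inE; exact: hasP. Qed.

Lemma srcP (n : nat) (C : seq (seq 'I_n)) v :
  reflect (exists2 c, c \in C & (c != [::]) && (v == head v c)) (v \in sources C).
Proof. rewrite /sources inE; exact: hasP. Qed.

Lemma ce_func (n : nat) (C : seq (seq 'I_n)) u w1 w2 :
  chain_cover C -> (u, w1) \in chain_edges C -> (u, w2) \in chain_edges C -> w1 = w2.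
Proof.
move=> [_ [uf _]] /ceP [c1 c1C h1] /ceP [c2 c2C h2].
have e : c1 = c2 by apply: (flatten_uniq_eq uf c1C c2C (mem_zb h1).1 (mem_zb h2).1).
rewrite -e in h2; exact: (zb_func (flatten_uniq_mem uf c1C) h1 h2).
Qed.

Lemma ce_inj (n : nat) (C : seq (seq 'I_n)) u1 u2 w :
  chain_cover C -> (u1, w) \in chain_edges C -> (u2, w) \in chain_edges C -> u1 = u2.
Proof.
move=> [_ [uf _]] /ceP [c1 c1C h1] /ceP [c2 c2C h2].
have e : c1 = c2 by apply: (flatten_uniq_eq uf c1C c2C (mem_behead (mem_zb h1).2) (mem_behead (mem_zb h2).2)).
rewrite -e in h2; exact: (zb_inj (flatten_uniq_mem uf c1C) h1 h2).
Qed.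

Lemma ce_tgt (n : nat) (C : seq (seq 'I_n)) u w :
  chain_cover C -> (u, w) \in chain_edges C -> w \notin sources C.
Proof.
move=> [_ [uf _]] /ceP [c cC h]; apply/negP => /srcP [c' c'C /andP [ne /eqP hw]].
have wc' : w \in c' by case: c' ne hw {c'C} => // a c' _ ->; rewrite mem_head.
have wb := (mem_zb h).2.
have e : c = c' by apply: (flatten_uniq_eq uf cC c'C (mem_behead wb) wc').
have uc := flatten_uniq_mem uf cC.
move: uc wb; rewrite e; case: c' {e c'C wc'} ne hw => // a c' _ /= -> /andP [an _] wb.
by rewrite wb in an.
Qed.

Lemma ce_pred (n : nat) (C : seq (seq 'I_n)) w :
  chain_cover C -> w \notin sources C -> exists u, (u, w) \in chain_edges C.
Proof.
move=> [ne [uf cov]] ws; have /flattenP [c cC wc] := cov w.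
case: c cC wc => [|a c] cC; first by rewrite in_nil.
rewrite in_cons => /orP [/eqP e|wc].
  by move/negP: ws; case; apply/srcP; exists (a :: c) => //=; rewrite e.
have [u hu] := zb_pred (c := a :: c) wc; exists u; apply/ceP; by exists (a :: c).
Qed.

Lemma Tmax_some (n : nat) (C : seq (seq 'I_n)) T u z :
  chain_cover C -> (u, z) \in chain_edges C -> Tmax C T u = (T z).-1.
Proof.
move=> cc h; rewrite /Tmax; case: pickP => [z' h'|none].
  by rewrite (ce_func cc h' h).
by have := none z; rewrite h.
Qed.

Lemma Tmax_none (n : nat) (C : seq (seq 'I_n)) T u :
  (forall z, (u, z) \notin chain_edges C) -> Tmax C T u = gamma C.
Proof.
move=> H; rewrite /Tmax; case: pickP => [z' h'|//].
by have := H z'; rewrite h'.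
Qed.

Lemma tf_ge2 (n : nat) (C : seq (seq 'I_n)) T w :
  chain_cover C -> time_function C T -> w \notin sources C -> 2 <= T w.
Proof.
move=> cc [hb [_ [_ hinc]]] ws; have [u hu] := ce_pred cc ws.
have := hinc _ _ hu; have := hb u; case/andP => h1 _ h2.
exact: leq_ltn_trans h1 h2.
Qed.

Lemma nx_eq (n : nat) (C : seq (seq 'I_n)) u x :
  chain_cover C -> (u, x) \in chain_edges C -> [pick w | (u, w) \in chain_edges C] = Some x.
Proof.
move=> cc h; case: pickP => [x' h'|none]; first by rewrite (ce_func cc h' h).
by have := none x; rewrite h.
Qed.

Lemma nonedge (n : nat) (C : seq (seq 'I_n)) T u w :
  chain_cover C -> time_function C T -> (u, w) \notin perfect_edges C T ->
  exists2 x, (u, x) \in chain_edges C &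
    [&& x \notin sources C, w \notin sources C & T x < T w].
Proof.
move=> cc tf; have [hb [hs [hd hinc]]] := tf.
rewrite /perfect_edges in_setU negb_or => /andP [nce]; rewrite inE /= => nle.
case: (pickP (fun z => (u, z) \in chain_edges C)) => [x /= hx|none]; last first.
  rewrite Tmax_none in nle; last by move=> z; rewrite none.
  by have := hb w; case/andP => _ h; rewrite h in nle.
exists x => //.
rewrite (Tmax_some T cc hx) -ltnNge in nle.
have xs := ce_tgt cc hx.
have x2 := tf_ge2 cc tf xs.
have ws : w \notin sources C.
  apply/negP => ws; have := hs _ ws => e; rewrite e in nle; lia.
have wx : w != x by apply/negP => /eqP e; rewrite e hx in nce.
have := hd _ _ ws xs wx; rewrite xs ws /=; lia.
Qed.

Lemma edge_of (n : nat) (C : seq (seq 'I_n)) T u x w :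
  chain_cover C -> (u, x) \in chain_edges C -> T x < T w ->
  (u, w) \notin perfect_edges C T.
Proof.
move=> cc hx lt; rewrite /perfect_edges in_setU negb_or; apply/andP; split; last rewrite inE /=.
  by apply/negP => hw; rewrite (ce_func cc hw hx) ltnn in lt.
rewrite (Tmax_some T cc hx); lia.
Qed.

Lemma count_nonedges (n : nat) (C : seq (seq 'I_n)) T :
  chain_cover C -> time_function C T ->
  (2 * #|~: perfect_edges C T| = #|~: sources C| * (#|~: sources C|).-1)%N.
Proof.
move=> cc tf; have [hb [hs [hd hinc]]] := tf.
set S := sources C.
pose Q := [set p : 'I_n * 'I_n | [&& p.1 \notin S, p.2 \notin S & T p.1 < T p.2]].
pose f (p : 'I_n * 'I_n) := (odflt p.1 [pick w | (p.1, w) \in chain_edges C], p.2).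
have e1 : #|~: perfect_edges C T| = #|Q|.
  have inj : {in ~: perfect_edges C T &, injective f}.
    move=> [u1 w1] [u2 w2]; rewrite !in_setC => /(nonedge cc tf) [x1 h1 _] /(nonedge cc tf) [x2 h2 _].
    rewrite /f /= (nx_eq cc h1) (nx_eq cc h2) /= => [[ex ew]].
    by rewrite ew (ce_inj cc h1 (_ : (u2, x1) \in _)) // ex.
  have img : f @: (~: perfect_edges C T) = Q.
    apply/setP => [[x w]]; apply/imsetP/idP.
      move=> [[u w'] hp [-> ->]]; move: hp; rewrite in_setC => /(nonedge cc tf) [x' hx' H].
      by rewrite /f /= (nx_eq cc hx') inE.
    rewrite inE /= => /and3P [xs ws lt].
    have [u hu] := ce_pred cc xs.
    exists (u, w); first by rewrite in_setC; apply: edge_of hu lt.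
    by rewrite /f /= (nx_eq cc hu).
  by rewrite -img card_in_imset.
have hd' : forall u v, u \notin S -> v \notin S -> u != v -> T u != T v := hd.
clearbody S.
pose Q' := [set p : 'I_n * 'I_n | [&& p.1 \notin S, p.2 \notin S & T p.2 < T p.1]].
have e2 : #|Q'| = #|Q|.
  have -> : Q' = (fun p : 'I_n * 'I_n => (p.2, p.1)) @: Q.
    apply/setP => [[a b]]; apply/idP/imsetP.
      by rewrite inE /= => /and3P [h1 h2 h3]; exists (b, a) => //; rewrite inE /= h1 h2 h3.
    by move=> [[c d] hq [-> ->]]; move: hq; rewrite !inE /= => /and3P [-> -> ->].
  by apply: card_imset => [[a b] [c d]] /= [-> ->].
pose NS2 := setX (~: S) (~: S).
pose Dg := [set p in NS2 | p.1 == p.2].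
have e3 : #|Dg| = #|~: S|.
  have -> : Dg = (fun x => (x, x)) @: (~: S).
    apply/setP => [[a b]]; apply/idP/imsetP.
      by rewrite !inE /= => /andP [/andP [h1 _] /eqP e]; exists a; rewrite ?inE // e.
    by move=> [c hc [-> ->]]; move: hc; rewrite !inE /= => ->; rewrite eqxx.
  by apply: card_imset => a b [].
have e4 : NS2 :\: Dg = Q :|: Q'.
  apply/setP => [[a b]]; rewrite !inE /=.
  case: (boolP (a \in S)) => //= ha; case: (boolP (b \in S)) => //= hb'.
  case: (boolP (a == b)) => [/eqP ->|ab]; first by rewrite ltnn.
  have := hd' _ _ ha hb' ab; lia.
have e5 : Q :&: Q' = set0.
  apply/setP => [[a b]]; rewrite !inE /=.
  lia.
have e6 : #|NS2| = (#|~: S| * #|~: S|)%N by rewrite cardsX.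
have := cardsID Dg NS2.
have -> : NS2 :&: Dg = Dg by apply/setIidPr; apply/subsetP => p; rewrite inE => /andP [].
rewrite e4 cardsU e5 cards0 subn0 e2 e3 e6 e1.
move=> h; rewrite -subn1 mulnBr muln1 -h addKn mul2n -addnn. reflexivity.
Qed.

Lemma setcons (n : nat) (B : {set 'I_n}) y s :
  B :|: [set x in y :: s] = (y |: B) :|: [set x in s].
Proof. by apply/setP => z; rewrite !inE; case: (z \in B); case: (z == y). Qed.

Lemma setnil (n : nat) (B : {set 'I_n}) : B :|: [set x in [::]] = B.
Proof. by apply/setP => z; rewrite !inE orbF. Qed.

Lemma valid_forcing_cat (n : nat) (E : {set 'I_n * 'I_n}) B s1 s2 :
  valid_forcing E B (s1 ++ s2) =
  valid_forcing E B s1 && valid_forcing E (B :|: [set x in s1]) s2.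
Proof.
elim: s1 B => [|y s1 IH] B /=; first by rewrite setnil.
by rewrite IH setcons andbA.
Qed.

Lemma perfect_zfs (n : nat) (C : seq (seq 'I_n)) T (E : {set 'I_n * 'I_n}) S :
  chain_cover C -> time_function C T -> sources C = S ->
  chain_edges C \subset E -> E \subset perfect_edges C T ->
  zero_forcing_set E S.
Proof.
move=> cc tf HS sub1 sub2; have [hb [hs [hd hinc]]] := tf.
have T1 : forall w, (T w <= 1) = (w \in S).
  move=> w; rewrite -HS; apply/idP/idP => [h|/hs -> //].
  by apply: contraLR h => /(tf_ge2 cc tf); rewrite -ltnNge.
have step : forall t, exists s, valid_forcing E S s /\
    S :|: [set x in s] = [set w | T w <= t.+1].
  elim => [|t [s [hv he]]].
    by exists [::]; split => //; apply/setP => w; rewrite setnil inE T1.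
  move/setP: he => he.
  have key : forall w, (w \in S) || (w \in s) = (T w <= t.+1).
    by move=> w; have := he w; rewrite !inE.
  case: (pickP (fun y => T y == t.+2)) => [y /eqP hy | none].
  - have yS : y \notin S by rewrite -T1 hy.
    have [p hp] : exists p, (p, y) \in chain_edges C by apply: ce_pred; rewrite ?HS.
    exists (rcons s y); split.
      rewrite -cats1 valid_forcing_cat hv /= andbT; apply/existsP; exists p.
      apply/andP; split; first by rewrite !inE key; have := hinc _ _ hp; rewrite hy.
      apply/eqP/setP => w; rewrite !inE key.
      case: (eqVneq w y) => [->|wy]; first by rewrite hy ltnn (subsetP sub1 _ hp).
      apply/negP => /andP [hT hE]; have := subsetP sub2 _ hE.
      rewrite /perfect_edges in_setU => /orP [hc|].
        by rewrite (ce_func cc hc hp) eqxx in wy.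
      by rewrite inE /= (Tmax_some T cc hp) hy /= => h; rewrite h in hT.
    apply/setP => w; rewrite !inE mem_rcons in_cons.
    case: (eqVneq w y) => [->|wy]; first by rewrite orbT hy leqnn.
    rewrite /= key [X in _ = X]leq_eqVlt ltnS; case: (eqVneq (T w) t.+2) => [hw|] //=.
    have wS : w \notin S by rewrite -T1 hw.
    by have := hd w y; rewrite HS => /(_ wS yS wy); rewrite hw hy eqxx.
  - exists s; split => //; apply/setP => w; rewrite !inE key [X in _ = X]leq_eqVlt ltnS.
    by have := none w; rewrite /= => ->.
have [s [hv he]] := step (gamma C).-1.
exists s; split => //; rewrite he; apply/setP => w; rewrite !inE.
have -> : (gamma C).-1.+1 = gamma C by rewrite /gamma addn1.
by case/andP: (hb w).
Qed.

Lemma vf_props (n : nat) (E : {set 'I_n * 'I_n}) B s :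
  valid_forcing E B s -> uniq s /\ (forall x, x \in s -> x \notin B).
Proof.
elim: s B => [|y s IH] B //= /andP [/existsP [x /andP [_ /eqP H]] hv].
have yB : y \notin B.
  have : y \in out_nbrs E x :\: B by rewrite H set11.
  by rewrite inE => /andP [].
have [us hx] := IH _ hv; split.
  rewrite us andbT; apply/negP => ys; have := hx _ ys; by rewrite setU11.
move=> z; rewrite in_cons => /orP [/eqP -> //|zs].
by have := hx _ zs; rewrite in_setU1 negb_or => /andP [].
Qed.

Lemma flatten_single (T : Type) (l : seq T) : flatten [seq [:: v] | v <- l] = l.
Proof. by elim: l => //= a l ->. Qed.

Lemma index_take (T : eqType) (s : seq T) i w : w \in take i s -> index w s < i.
Proof.
move=> h; rewrite -(cat_take_drop i s) index_cat h.
have := index_mem w (take i s); rewrite h => h'.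
apply: leq_trans h' _; rewrite size_take; case: ltnP => // /ltnW //.
Qed.

Lemma build (n : nat) (E : {set 'I_n * 'I_n}) (VC : {set 'I_n}) s :
  valid_forcing E VC s -> VC :|: [set x in s] = setT ->
  exists C T, [/\ chain_cover C, sources C = VC, time_function C T,
     chain_edges C \subset E & E \subset perfect_edges C T].
Proof.
move=> hv hall; have [us dis] := vf_props hv.
pose T v := if v \in VC then 1 else (index v s).+2.
pose Blk i := VC :|: [set x in take i s].
pose Inv i C := [/\ all (fun c => c != [::]) C && uniq (flatten C),
   (forall v, (v \in flatten C) = (v \in Blk i)),
   sources C = VC /\ size C = #|VC| &
   (forall x z, (x, z) \in chain_edges C -> [/\ (x, z) \in E, T x < T z &
      forall w, (x, w) \in E -> (w = z \/ T w < T z) /\ w \in Blk i])].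
have Tblk : forall i w, w \in Blk i -> T w < i.+2.
  move=> i w; rewrite /T !inE; case: (w \in VC) => //= h.
  by have := index_take h.
have main : forall i, i <= size s -> exists C, Inv i C.
  elim => [_|i IH Hi].
    exists [seq [:: v] | v <- enum VC]; split.
    - by rewrite flatten_single enum_uniq andbT; apply/allP => c /mapP [v _ ->].
    - by move=> v; rewrite flatten_single mem_enum /Blk take0 setnil.
    - split; last by rewrite size_map cardE.
      apply/setP => v; apply/srcP/idP.
        by move=> [c /mapP [u hu ->] /= /eqP ->]; rewrite mem_enum in hu.
      move=> hv'; exists [:: v]; last by rewrite /= eqxx. rewrite mem_map ?mem_enum //; by move=> a b [->].
    - by move=> x z /ceP [c /mapP [u _ ->]].
  have [C [/andP [ne uf] hmem [hsrc hsz] hce]] := IH (ltnW Hi).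
  have x0 : 'I_n by move: Hi; case: (s) => [//|a _ _]; exact: a.
  set y := nth x0 s i.
  have ys : y \in s by apply: mem_nth.
  have yVC : y \notin VC by apply: dis.
  have Ty : T y = i.+2 by rewrite /T (negbTE yVC) index_uniq.
  have yB : y \notin Blk i.
    rewrite !inE (negbTE yVC) /=; apply/negP => /index_take; by rewrite index_uniq // ltnn.
  have Bs : Blk i.+1 = y |: Blk i.
    by apply/setP => v; rewrite /Blk (take_nth x0 Hi) !inE mem_rcons in_cons; case: (v == y); rewrite ?orbT.
  have hvi : valid_forcing E (Blk i) (drop i s).
    by move: hv; rewrite -{1}(cat_take_drop i s) valid_forcing_cat => /andP [].
  move: hvi; rewrite (drop_nth x0 Hi) /= => /andP [/existsP [x /andP [xB /eqP Hx]] _].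
  have xy : (x, y) \in E.
    have : y \in out_nbrs E x :\: Blk i by rewrite Hx set11.
    by rewrite !inE => /andP [].
  have xout : forall w, (x, w) \in E -> w = y \/ w \in Blk i.
    move=> w hw; case: (boolP (w \in Blk i)) => hb; [by right | left].
    have : w \in out_nbrs E x :\: Blk i by rewrite in_setD hb /out_nbrs inE.
    by rewrite Hx inE => /eqP.
  have /flattenP [c cC xc] : x \in flatten C by rewrite hmem.
  have cne : c != [::] by move/allP: ne; apply.
  case: c cne cC xc => [//|a c'] _ cC xc.
  have xl : x = last a c'.
    apply: zb_last => // w; apply/negP => hw.
    have hxw : (x, w) \in chain_edges C by apply/ceP; exists (a :: c').
    have [_ _ H] := hce x w hxw.
    by have := (H y xy).2; rewrite (negbTE yB).
  set c := a :: c' in cC xc xl.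
  pose C' := rcons c y :: rem c C.
  have pC : perm_eq C (c :: rem c C) by apply: perm_to_rem.
  have pF : perm_eq (flatten C') (y :: flatten C).
    rewrite /C' /= -cats1 -catA /= -cat1s (perm_catCA c [:: y]) cat1s perm_cons.
    by rewrite perm_sym; exact: (perm_flatten pC).
  have ceC' : forall p, (p \in chain_edges C') = (p == (x, y)) || (p \in chain_edges C).
    move=> p; rewrite /chain_edges !inE /= (perm_has _ pC) /= /chain_edges_of.
    by rewrite zb_rcons -xl mem_rcons in_cons orbA.
  exists C'; split.
  - apply/andP; split; last by rewrite (perm_uniq pF) /= uf hmem yB.
    rewrite /C' /=.
    by apply/allP => d /mem_rem dC; move/allP: ne; apply.
  - by move=> v; rewrite (perm_mem pF) in_cons hmem Bs in_setU1.
  - split; last by rewrite /C' /= size_rem // prednK //; case: (C) cC.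
    rewrite -hsrc; apply/setP => v; rewrite /sources !inE [in RHS](perm_has _ pC) /=.
    by [].
  - move=> x1 z1; rewrite ceC' => /orP [/eqP [-> ->]|hc].
      split => //; first by rewrite Ty; apply: Tblk.
      move=> w hw; case: (xout w hw) => [->|wb]; first by split; [left|rewrite Bs setU11].
      by split; [right; rewrite Ty; apply: Tblk | rewrite Bs setU1r].
    have [h1 h2 h3] := hce x1 z1 hc; split => // w hw.
    by have [? ?] := h3 w hw; split => //; rewrite Bs setU1r.
have [C [/andP [ne uf] hmem [hsrc hsz] hce]] := main _ (leqnn _).
have BT : forall v, v \in Blk (size s) by move=> v; rewrite /Blk take_size hall inE.
have cc : chain_cover C by split; [|split] => // v; rewrite hmem BT.
have szF : size (flatten C) = n.
  move/card_uniqP: (uf) => <-; rewrite -[RHS]card_ord; apply: eq_card => v.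
  by rewrite hmem BT.
have szs : size s = n - #|VC|.
  have := congr1 (fun X : {set 'I_n} => #|X|) hall; rewrite /= cardsT card_ord cardsU.
  have -> : VC :&: [set x in s] = set0.
    apply/setP => v; rewrite !inE; case vs: (v \in s); rewrite ?andbF ?andbT //.
    exact: negbTE (dis _ vs).
  move/card_uniqP: (us) => e; rewrite cards0 subn0 cardsE e => h; by rewrite -[X in X - _]h addKn.
have gam : gamma C = (n - #|VC|).+1 by rewrite /gamma szF hsz addn1.
have Tb : forall v, 0 < T v <= gamma C.
  move=> v; rewrite /T gam; case: (boolP (v \in VC)) => hv' //=.
  have : v \in VC :|: [set x in s] by rewrite hall inE.
  rewrite in_setU (negbTE hv') inE /= -index_mem szs => h; rewrite /= ltnS; exact: h.
exists C, T; split => //.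
- split => //; split; first by move=> v; rewrite hsrc /T => ->.
  split; last by move=> u v h; case: (hce _ _ h).
  move=> u v; rewrite hsrc => hu hv' uv; rewrite /T (negbTE hu) (negbTE hv') eqSS.
  apply: contra uv => /eqP e.
  have us' : u \in s.
    have : u \in VC :|: [set x in s] by rewrite hall inE.
    by rewrite in_setU (negbTE hu) inE.
  have vs' : v \in s.
    have : v \in VC :|: [set x in s] by rewrite hall inE.
    by rewrite in_setU (negbTE hv') inE.
  apply/eqP; rewrite -(nth_index u us') -[v in RHS](nth_index u vs'); congr (nth _ _ _); by case: e.
- by apply/subsetP => [[x z]] h; case: (hce _ _ h).
apply/subsetP => [[u v]] huv; rewrite /perfect_edges in_setU.
case: (pickP (fun z => (u, z) \in chain_edges C)) => [z /= hz|none].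
  have [_ _ H] := hce _ _ hz; case: (H v huv) => [[->|lt] _]; first by rewrite hz.
  apply/orP; right; rewrite inE /= (Tmax_some T cc hz); lia.
apply/orP; right; rewrite inE /= Tmax_none; first by case/andP: (Tb v).
by move=> z; rewrite none.
Qed.
Section LinAlg.
Import GRing.Theory Num.Theory.
Local Open Scope ring_scope.

Lemma kalman_mul (n m : nat) (A : 'M[R]_n) (B : 'M[R]_(n, m)) (x : 'rV[R]_n) :
  x *m kalman A B = 0 <-> (forall k : 'I_n, x *m (A ^+ k *m B) = 0).
Proof.
rewrite /kalman mul_mxrow -(@mxrow0 _ _ (fun _ : 'I_n => m)).
split; last by move=> H; apply/eq_mxrowP.
by move/eq_mxrowP.
Qed.

Lemma CH_step (n m : nat) (A : 'M[R]_n) (B : 'M[R]_(n, m)) (x : 'rV[R]_n) :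
  (forall k, (k < n)%N -> x *m (A ^+ k *m B) = 0) -> x *m (A ^+ n *m B) = 0.
Proof.
case: n A B x => [|n] A B x H.
  by rewrite (thinmx0 x) mul0mx.
have CH := Cayley_Hamilton A.
have e : horner_mx A (char_poly A) = \sum_(i < n.+2) ((char_poly A)`_i)%:M * A ^+ i.
  rewrite /horner_mx /horner_morph (horner_coef_wide (n := n.+2)).
    by apply: eq_bigr => i _; rewrite coef_map.
  rewrite size_map_poly_id0 ?size_char_poly //.
  rewrite (monicP (char_poly_monic A)); apply/eqP => /matrixP /(_ 0 0).
  by rewrite !mxE eqxx /=; apply/eqP; exact: oner_neq0.
have c1 : (char_poly A)`_n.+1 = 1.
  by have := monicP (char_poly_monic A); rewrite lead_coefE size_char_poly.
move: CH; rewrite e big_ord_recr /= c1 => /eqP; rewrite addr_eq0 => /eqP hA.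
have hA' : A ^+ n.+1 = - \sum_(i < n.+1) ((char_poly A)`_i)%:M * A ^+ i.
  by rewrite hA opprK mul1r.
rewrite hA' mulNmx mulmxN mulmx_suml mulmx_sumr big1 ?oppr0 // => i _.
rewrite -[_ * _]/(_ *m _) mul_scalar_mx -scalemxAl -scalemxAr mulmxA.
by rewrite -mulmxA H ?scaler0.
Qed.

Lemma zfs_ssc (n : nat) (E : {set 'I_n * 'I_n}) (VC : {set 'I_n}) :
  zero_forcing_set E VC -> SSC E VC.
Proof.
move=> [s [Hv Hall]] A HA; rewrite /controllable; apply/eqP.
apply: inj_row_free => x Hx.
pose N (y : 'rV[R]_n) := forall k, (k < n)%N -> y *m (A ^+ k *m Bmat VC) = 0.
have NA : forall y, N y -> N (y *m A).
  move=> y Hy k Hk; rewrite -mulmxA [A *m (_ *m _)]mulmxA.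
  rewrite -[A *m A ^+ k]/(A * A ^+ k) -exprS.
  case: (ltnP k.+1 n) => Hk'; first exact: Hy.
  have -> : k.+1 = n by apply/eqP; rewrite eqn_leq Hk Hk'.
  exact: CH_step Hy.
have N0 : forall y, N y -> forall i, i \in VC -> y 0 i = 0.
  move=> y Hy i Hi.
  have := Hy 0%N (leq_ltn_trans (leq0n _) (ltn_ord i)).
  rewrite expr0 mul1mx => /matrixP /(_ 0 (enum_rank_in Hi i)).
  rewrite !mxE (bigD1 i) //= big1 ?addr0.
    by rewrite !mxE (enum_rankK_in Hi Hi) eqxx mulr1.
  by move=> j Hj; rewrite !mxE (enum_rankK_in Hi Hi) (negbTE Hj) mulr0.
have key : forall Blk s, valid_forcing E Blk s ->
    (forall y, N y -> forall i, i \in Blk -> y 0 i = 0) ->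
    forall y, N y -> forall i, i \in Blk :|: [set x in s] -> y 0 i = 0.
  move=> Blk s0; elim: s0 Blk => [|z s' IH] Blk /=.
    by move=> _ H y Hy i; rewrite in_setU inE in_nil orbF; apply: H.
  move=> /andP [/existsP [j /andP [jB /eqP Hj]] Hv'] H.
  have zo : z \in out_nbrs E j :\: Blk by rewrite Hj set11.
  move: zo; rewrite !inE => /andP [zB jz].
  have zj : z != j by apply/eqP => e; rewrite e jB in zB.
  have H' : forall y, N y -> forall i, i \in z |: Blk -> y 0 i = 0.
    move=> y Hy i; rewrite in_setU1 => /orP [/eqP -> |]; last exact: H.
    have := H _ (NA _ Hy) j jB; rewrite mxE (bigD1 z) //= big1 ?addr0.
      move/eqP; rewrite mulf_eq0 => /orP [/eqP //|].
      by have := (HA z j zj).2 jz => /negbTE ->.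
    move=> i' i'z; case iB: (i' \in Blk); first by rewrite H // mul0r.
    have i'j : i' != j by apply/eqP => e; rewrite e jB in iB.
    case: (boolP (A i' j != 0)) => [Aij|]; last by rewrite negbK => /eqP ->; rewrite mulr0.
    have := (HA i' j i'j).1 Aij => ji.
    have : i' \in out_nbrs E j :\: Blk by rewrite !inE iB ji.
    by rewrite Hj inE (negbTE i'z).
  move=> y Hy i Hi; apply: (IH _ Hv' H' y Hy i).
  move: Hi; rewrite !inE; case: (i == z) => //=; by rewrite orbT.
have Nx : N x by move=> k Hk; have := (kalman_mul A (Bmat VC) x).1 Hx (Ordinal Hk).
apply/rowP => i; rewrite mxE; apply: (key _ _ Hv N0 x Nx i).
by rewrite Hall inE.
Qed.

Lemma closure_ex (n : nat) (E : {set 'I_n * 'I_n}) (Blk : {set 'I_n}) :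
  exists s, valid_forcing E Blk s /\
    ~~ [exists x, exists y, forces E (Blk :|: [set x in s]) x y].
Proof.
move: {2}#|~: Blk| (leqnn #|~: Blk|) => k; elim: k Blk => [|k IH] Blk Hk.
  exists [::]; split => //; apply/negP => /existsP [x /existsP [y /andP [_ /eqP H]]].
  have : y \in ~: Blk.
    have : y \in out_nbrs E x :\: (Blk :|: [set x in [::]]) by rewrite H set11.
    by rewrite !inE => /andP [/norP [] ].
  by move: Hk; rewrite leqn0 cards_eq0 => /eqP ->; rewrite inE.
case: (boolP [exists x, exists y, forces E Blk x y]); last first.
  move=> H; exists [::]; split => //.
  by apply: contra H => /existsP [x /existsP [y Hy]]; apply/existsP; exists x; apply/existsP; exists y;
    move: Hy; rewrite /forces; have -> : Blk :|: [set x in [::]] = Blk by apply/setP => z; rewrite !inE orbF.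
move=> /existsP [x /existsP [y Hxy]].
have yB : y \notin Blk.
  move: Hxy => /andP [_ /eqP H].
  have : y \in out_nbrs E x :\: Blk by rewrite H set11.
  by rewrite !inE => /andP [].
have Hk' : (#|~: (y |: Blk)| <= k)%N.
  have : (#|~: (y |: Blk)| < #|~: Blk|)%N.
    apply: proper_card; rewrite properE !setCS subsetUr /=; apply/subsetPn; exists y => //; exact: setU11.
  by move=> H; rewrite -ltnS; apply: leq_trans H Hk.
have [s [Hs Hn]] := IH _ Hk'.
exists (y :: s); split; first by rewrite /= Hs andbT; apply/existsP; exists x.
by have -> : Blk :|: [set x in y :: s] = y |: Blk :|: [set x in s]
  by apply/setP => z; rewrite !inE; case: (z == y); rewrite ?orbT.
Qed.

Lemma nzfs_nssc (n : nat) (E : {set 'I_n * 'I_n}) (VC : {set 'I_n}) :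
  ~ zero_forcing_set E VC -> ~ SSC E VC.
Proof.
move=> nZ HS.
have [s [Hv Hn]] := closure_ex E VC.
set D := VC :|: [set x in s] in Hn.
have [w0 w0D] : exists w0, w0 \notin D.
  apply/existsP; apply: contraT; rewrite negb_exists => /forallP Hall.
  exfalso; apply: nZ; exists s; split => //; apply/setP => z; move: (Hall z); rewrite negbK !inE => -> //.
pose out' j := out_nbrs E j :\: D.
have nf : forall j, j \in D -> #|out' j| != 1%N.
  move=> j jD; apply/negP => /cards1P [y Hy]; move/negP: Hn; apply; apply/existsP; exists j.
  by apply/existsP; exists y; rewrite /forces jD -/(out' j) Hy eqxx.
pose wt j i : R := if (j \in D) && ([pick w in out' j] == Some i) then 1 - (#|out' j|)%:R else 1.
have wt0 : forall j i, wt j i != 0.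
  move=> j i; rewrite /wt; case: andP => [[jD /eqP pk]|_]; last exact: oner_neq0.
  rewrite subr_eq0 eq_sym pnatr_eq1; apply: nf jD.
pose A' := \matrix_(i < n, j < n) (if (j, i) \in E then wt j i else 0).
pose A := \matrix_(i < n, j < n) (if i == j then - \sum_(l | (l \notin D) && (l != j)) A' l j else A' i j).
pose x := \row_(i < n) (if i \in D then 0 else 1 : R).
have HQ : inQ E A.
  move=> i j ij; rewrite !mxE (negbTE ij).
  case: ((j, i) \in E); split => // ; try (move=> _; apply: wt0); try by rewrite eqxx.
have xA : x *m A = 0.
  apply/rowP => j; rewrite !mxE.
  transitivity (\sum_(i | i \notin D) A i j).
    rewrite [RHS]big_mkcond; apply: eq_bigr => i _; rewrite !mxE.
    by case: (i \in D); rewrite /= ?mul0r ?mul1r.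
  case jD: (j \in D); last first.
    rewrite (bigD1 j) ?jD //= mxE eqxx.
    rewrite [X in _ + X](eq_bigr (fun i => A' i j)); last first.
      by move=> i /andP [_ ij]; rewrite mxE (negbTE ij).
    by rewrite addNr.
  transitivity (\sum_(i in out' j) wt j i).
    rewrite [RHS]big_mkcond [LHS]big_mkcond; apply: eq_bigr => i _.
    rewrite !mxE; case iD: (i \in D) => /=; first by rewrite /out' in_setD iD.
    have -> : (i == j) = false by apply/negP => /eqP e; rewrite e jD in iD.
    by rewrite /out' in_setD iD /out_nbrs inE.
  rewrite /wt jD /=; case: pickP => [p pin|none]; last first.
    by rewrite big_pred0.
  rewrite (bigD1 p) //= eqxx.
  rewrite (eq_bigr (fun _ => 1)); last by move=> i /andP [_ ip]; rewrite (inj_eq (@Some_inj _)) eq_sym (negbTE ip).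
  rewrite sumr_const.
  have -> : #|[pred i in out' j | i != p]| = (#|out' j| - 1)%N.
    by rewrite (cardsD1 p (out' j)) pin add1n subSS subn0; apply: eq_card => i; rewrite !inE andbC.
  rewrite natrB; last by apply/card_gt0P; exists p.
  by rewrite addrA subrK subrr.
have xB : x *m Bmat VC = 0.
  apply/rowP => k; rewrite !mxE (bigD1 (enum_val k)) //= big1.
    by rewrite !mxE eqxx (_ : enum_val k \in D) ?mul0r ?addr0 // inE (enum_valP k).
  by move=> i ik; rewrite !mxE (negbTE ik) mulr0.
have xK : x *m kalman A (Bmat VC) = 0.
  apply/kalman_mul => k; case: k => [[|k]] /= _; first by rewrite expr0 mul1mx.
  by rewrite exprS -[A * _]/(A *m _) -mulmxA mulmxA xA !mul0mx.
have := HS A HQ; rewrite /controllable => /eqP Hf.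
have : x == 0 by rewrite -(mulmx_free_eq0 _ Hf) xK.
by move/eqP/rowP/(_ w0); rewrite !mxE (negbTE w0D) => /eqP; rewrite oner_eq0.
Qed.

End LinAlg.

Theorem theorem5 (n : nat) (E : {set 'I_n * 'I_n}) (VC : {set 'I_n}) :
  zero_forcing_set E VC ->
  ((forall u v : 'I_n, (u, v) \notin E -> ~ SSC (E :|: [set (u, v)]) VC)
   <->
   (exists C : seq (seq 'I_n), chain_cover C /\ sources C = VC /\
      exists T : 'I_n -> nat, time_function C T /\ E = perfect_edges C T)).
Proof.
move=> [s [hv hall]]; split.
- move=> H; have [C [T [cc hsrc tf sub1 sub2]]] := build hv hall.
  exists C; split => //; split => //; exists T; split => //.
  apply/eqP; rewrite eqEsubset sub2 /=; apply/subsetP => [[u v]] huv.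
  apply: contraT => hn; exfalso; apply: (H u v hn).
  apply: zfs_ssc; apply: (perfect_zfs cc tf hsrc).
    by apply: subset_trans sub1 (subsetUl _ _).
  apply/subsetP => p; rewrite in_setU => /orP [/(subsetP sub2) //|].
  by rewrite inE => /eqP ->.
- move=> [C [cc [hsrc [T [tf hE]]]]] u v huv hS.
  have Z : zero_forcing_set (E :|: [set (u, v)]) VC.
    by apply: NNPP => nz; exact: (nzfs_nssc nz hS).
  have [s' [hv' hall']] := Z.
  have [C' [T' [cc' hsrc' tf' _ sub']]] := build hv' hall'.
  have c1 := count_nonedges cc tf; have c2 := count_nonedges cc' tf'.
  rewrite hsrc in c1; rewrite hsrc' in c2.
  have lt : #|~: perfect_edges C' T'| < #|~: perfect_edges C T|.
    apply: proper_card; rewrite -hE properE; apply/andP; split.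
      by rewrite setCS; apply: subset_trans _ sub'; exact: subsetUl.
    apply/subsetPn; exists (u, v); first by rewrite in_setC.
    rewrite in_setC negbK; apply: (subsetP sub'); by rewrite !inE eqxx orbT.
  by move: lt; rewrite -(ltn_pmul2l (_ : 0 < 2)) // c1 c2 ltnn.
Qed.
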